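(* Let $S=\{\rho_1=0<\rho_2<\rho_3<\cdots\}\subseteq\mathbb{N}_0$ be an Arf numerical semigroup of genus $g$, and let $c=\rho_r$ be its conductor. Put $l_0=0$ and, for $i=1,\dots,r-1$, $l_i=r+\rho_{i+1}-2$. For a positive integer $l$ let $$d_{ORD}(l)=\min\{\#A[\rho]\ :\ \rho\in S,\ \rho\ge\rho_{l+1}\}.$$ Then for every positive integer $l$: (a) if $l_{i-1}<l\le l_i$ for some $i\in\{1,\dots,r-1\}$, then $d_{ORD}(l)=2i$; (b) if $l\ge l_{r-1}=c+r-2$, then $d_{ORD}(l)=l+1-g$.
   Context: A numerical semigroup is a submonoid $S$ of $(\mathbb{N}_0,+)$ with finite complement; its elements are listed increasingly as $\rho_1=0<\rho_2<\cdots$. The conductor $c$ is the smallest integer such that every integer $\ge c$ lies in $S$, and $r$ is the index with $c=\rho_r$. The genus $g=c-r+1$ is the number of elements of $\mathbb{N}_0\setminus S$. $S$ is an Arf semigroup if for all positive integers $i\ge j\ge k$ one has $\rho_i+\rho_j-\rho_k\in S$. For $\rho\in S$, $A[\rho]=\{p\in S:\ \rho-p\in S\}$. The quantity $d_{ORD}(l)$ is the order (Feng–Rao) bound on the minimum distance of the one-point algebraic geometry code $C_\Omega(\mathcal{P},\rho_lQ)$ when $S$ is the Weierstrass semigroup at $Q$. *)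

(* Defs.v *)
From mathcomp Require Import all_boot.
Set Implicit Arguments. Unset Strict Implicit. Unset Printing Implicit Defensive.

Definition numerical_semigroup (S : pred nat) : Prop :=
  [/\ S 0, (forall a b, S a -> S b -> S (a + b)) &
      exists N, forall n, N <= n -> S n].

(* rho lists the elements of S increasingly: rho 1 < rho 2 < ...  (index 0 unused) *)
Definition enumerates (S : pred nat) (rho : nat -> nat) : Prop :=
  (forall i, 0 < i -> rho i < rho i.+1) /\
  (forall x, S x <-> exists2 i, 0 < i & rho i = x).

Definition is_conductor (S : pred nat) (c : nat) : Prop :=
  (forall n, c <= n -> S n) /\
  (forall c', (forall n, c' <= n -> S n) -> c <= c').

(* genus: number of gaps (all gaps are < c when c is the conductor) *)
Definition genus (S : pred nat) (c : nat) : nat := \sum_(n < c) ~~ S n.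

Definition Arf (S : pred nat) (rho : nat -> nat) : Prop :=
  forall i j k, 0 < k -> k <= j -> j <= i -> S (rho i + rho j - rho k).

(* #A[x] = #{p in S : x - p in S}  (such p satisfy p <= x) *)
Definition A_card (S : pred nat) (x : nat) : nat :=
  \sum_(p < x.+1) (S p && S (x - p)).

Definition is_dORD (S : pred nat) (rho : nat -> nat) (l d : nat) : Prop :=
  (exists2 x, S x /\ rho l.+1 <= x & A_card S x = d) /\
  (forall x, S x -> rho l.+1 <= x -> d <= A_card S x).

Definition lseq (rho : nat -> nat) (r i : nat) : nat :=
  if i == 0 then 0 else r + rho i.+1 - 2.

(* Main.v *)
Require Import Defs.
From mathcomp Require Import all_boot zify.
Set Implicit Arguments. Unset Strict Implicit.


Lemma leq_sum_nat' m n (F1 F2 : nat -> nat) :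
  (forall i, m <= i < n -> F1 i <= F2 i) ->
  \sum_(m <= i < n) F1 i <= \sum_(m <= i < n) F2 i.
Proof.
move=> H; rewrite big_nat_cond [X in _ <= X]big_nat_cond.
apply: leq_sum => i /andP[Hi _]; exact: H.
Qed.

Lemma rho_lt (rho : nat -> nat) :
  (forall i, 0 < i -> rho i < rho i.+1) ->
  forall i j, 0 < i -> i < j -> rho i < rho j.
Proof.
move=> H i j Hi; elim: j => // j IH; rewrite ltnS leq_eqVlt => /orP[/eqP<-|Hj].
  exact: H.
apply: (ltn_trans (IH Hj)); apply: H; lia.
Qed.

Lemma rho_le (rho : nat -> nat) :
  (forall i, 0 < i -> rho i < rho i.+1) ->
  forall i j, 0 < i -> i <= j -> rho i <= rho j.
Proof.
move=> H i j Hi Hij; case: (ltngtP i j) => [Hlt|Hlt|->//].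
  exact: ltnW (rho_lt H Hi Hlt).
lia.
Qed.

Lemma rho_ltI (rho : nat -> nat) :
  (forall i, 0 < i -> rho i < rho i.+1) ->
  forall i j, 0 < i -> 0 < j -> rho i < rho j -> i < j.
Proof.
move=> H i j Hi Hj Hr; rewrite ltnNge; apply/negP => Hji.
have := rho_le H Hj Hji; lia.
Qed.

Lemma rho_leI (rho : nat -> nat) :
  (forall i, 0 < i -> rho i < rho i.+1) ->
  forall i j, 0 < i -> 0 < j -> rho i <= rho j -> i <= j.
Proof.
move=> H i j Hi Hj Hr; rewrite leqNgt; apply/negP => Hji.
have := rho_lt H Hj Hji; lia.
Qed.

Lemma rho_ge (rho : nat -> nat) :
  (forall i, 0 < i -> rho i < rho i.+1) ->
  forall i, 0 < i -> i.-1 <= rho i.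
Proof.
move=> H; elim=> // i IH _; case: i IH => // i IH.
have := H i.+1 isT; have := IH isT; lia.
Qed.

Lemma rho1 (S : pred nat) rho : S 0 -> enumerates S rho -> rho 1 = 0.
Proof.
move=> S0 [H E]; have [i Hi Hr] := (proj1 (E 0)) S0.
have := rho_le H (isT : 0 < 1) Hi; lia.
Qed.

Lemma rho_above (S : pred nat) rho c r : enumerates S rho ->
  (forall n, c <= n -> S n) -> 0 < r -> rho r = c ->
  forall k, rho (r + k) = c + k.
Proof.
move=> [H E] Sc Hr Hrc; elim=> [|k IH]; first by rewrite !addn0.
have [j Hj Hjr] := (proj1 (E (c + k.+1))) (Sc _ (leq_addr _ _)).
have H1 : r + k < j by apply: (rho_ltI H); lia.
have H2 : rho (r+k) < rho (r+k).+1 by apply: H; lia.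
rewrite -Hjr; apply/eqP; rewrite eqn_leq; apply/andP; split.
  apply: (rho_le H); lia.
move: H1; rewrite leq_eqVlt => /orP[/eqP <-|H1]; first by rewrite addnS.
have := rho_lt H (_ : 0 < (r + k).+1) H1; lia.
Qed.

Definition cnt (S : pred nat) m := \sum_(0 <= n < m) S n.

Lemma cnt_rho (S : pred nat) rho : S 0 -> enumerates S rho ->
  forall k, 0 < k -> cnt S (rho k) = k.-1.
Proof.
move=> S0 [H E]; elim=> // k IH _.
case: k IH => [|k] IH.
  by rewrite /cnt (rho1 S0 (conj H E)) big_geq.
rewrite /cnt (@big_cat_nat _ _ _ (rho k.+1)) //=; last exact/ltnW/H.
rewrite -/(cnt S (rho k.+1)) IH // big_ltn; last exact: H.
rewrite big_nat_cond big1 /=.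
  have := (proj2 (E (rho k.+1))) (ex_intro2 _ _ k.+1 isT erefl); move=> ->; lia.
move=> n /andP[/andP[H1 H2] _]; case Sn: (S n) => //.
have [j Hj Hjn] := (proj1 (E n)) Sn; subst n.
have := rho_ltI H (ltn0Sn k) Hj H1; have := rho_ltI H Hj (ltn0Sn k.+1) H2; lia.
Qed.

Lemma T_eq (S : pred nat) m x : m <= x.+1 ->
  \sum_(0 <= p < x.+1) ((p < m) && S p) = cnt S m.
Proof.
move=> Hm; rewrite (@big_cat_nat _ _ _ m) //=.
have -> : \sum_(m <= p < x.+1) ((p < m) && S p) = 0.
  rewrite big_nat_cond big1 //.
  by move=> p /andP[/andP[H1 _] _]; rewrite ltnNge H1.
rewrite addn0 /cnt; apply: eq_big_nat => p /andP[_ ->]; by [].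
Qed.

Lemma refl_sum (S : pred nat) m x : m <= x.+1 ->
  \sum_(0 <= p < x.+1) (((p < m) && S p) + ((x - p < m) && S (x - p)))
  = 2 * cnt S m.
Proof.
move=> Hm; rewrite big_split /= T_eq //.
rewrite big_nat_rev /=.
have -> : \sum_(0 <= i < x.+1)
     ((x - (0 + x.+1 - i.+1) < m) && S (x - (0 + x.+1 - i.+1))) =
   \sum_(0 <= i < x.+1) ((i < m) && S i).
  apply: eq_big_nat => p /andP[_ Hp]; have -> : x - (0 + x.+1 - p.+1) = p by lia.
  by [].
rewrite T_eq //; lia.
Qed.

Lemma A_card_nat (S : pred nat) x :
  A_card S x = \sum_(0 <= p < x.+1) (S p && S (x - p)).
Proof. by rewrite /A_card big_mkord. Qed.

Lemma mid_count c x : c + c <= x.+1 ->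
  \sum_(0 <= p < x.+1) ((c <= p) && (p <= x - c)) = x.+1 - (c + c).
Proof.
move=> H; rewrite (@big_cat_nat _ _ _ c) //=; last lia.
rewrite (@big_cat_nat _ _ _ (x - c).+1 c) //=; try lia.
have -> : \sum_(0 <= p < c) ((c <= p) && (p <= x - c)) = 0.
  rewrite big_nat_cond big1 //.
  by move=> p /andP[/andP[_ H1] _]; rewrite leqNgt H1.
have -> : \sum_((x - c).+1 <= p < x.+1) ((c <= p) && (p <= x - c)) = 0.
  rewrite big_nat_cond big1 //.
  move=> p /andP[/andP[H1 _] _]; have -> : (p <= x - c) = false by lia.
  by rewrite andbF.
rewrite (eq_big_nat _ _ (F2 := fun => 1)); last first.
  move=> p /andP[H1 H2]; rewrite H1 /=; have -> : p <= x - c by lia. by [].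
rewrite sum_nat_const_nat; lia.
Qed.

Lemma genus_cnt (S : pred nat) c : genus S c = c - cnt S c.
Proof.
rewrite /genus /cnt. rewrite -(big_mkord xpredT (fun n => nat_of_bool (~~ S n))).
have : \sum_(0 <= n < c) (~~ S n + S n) = c.
  rewrite (eq_big_nat _ _ (F2 := fun => 1)); first by rewrite sum_nat_const_nat; lia.
  by move=> n _; case: (S n).
rewrite big_split /=; lia.
Qed.

Lemma rhoS (S : pred nat) rho : enumerates S rho -> forall i, 0 < i -> S (rho i).
Proof. by move=> [_ E] i Hi; apply/(proj2 (E _)); exists i. Qed.

Lemma le_rho_of (S : pred nat) rho : enumerates S rho ->
  forall k p, 0 < k -> S p -> p < rho k.+1 -> p <= rho k.
Proof.
move=> [H E] k p Hk Sp Hp; have [j Hj Hjp] := (proj1 (E p)) Sp; subst p.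
have := rho_ltI H Hj (ltn0Sn k) Hp; rewrite ltnS => Hjk.
have HH := @rho_le rho H j k Hj Hjk. exact: HH.
Qed.

Lemma LB (S : pred nat) rho k y : S 0 -> enumerates S rho -> 0 < k ->
  rho k.+1 <= y.+1 -> (forall p, p <= rho k -> S p -> S (y - p)) ->
  rho k + rho k < y -> 2 * k <= A_card S y.
Proof.
move=> S0 En Hk Hm Hy1 Hy2.
have -> : 2 * k = 2 * cnt S (rho k.+1) by rewrite (cnt_rho S0 En).
rewrite -(@refl_sum S _ y) // A_card_nat; apply: leq_sum_nat' => p /andP[_ Hp].
have A1 : (p < rho k.+1) && S p ==> S (y - p).
  by apply/implyP => /andP[hp Sp]; apply: Hy1 (le_rho_of En Hk Sp hp) Sp.
have A2 : (y - p < rho k.+1) && S (y - p) ==> S p.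
  apply/implyP => /andP[hq Sq]; have := Hy1 _ (le_rho_of En Hk Sq hq) Sq.
  have E : y - (y - p) = p by lia.
  by rewrite E.
have A3 : ~~ [&& p < rho k.+1, S p, y - p < rho k.+1 & S (y - p)].
  apply/negP => /and4P[hp Sp hq Sq].
  have := le_rho_of En Hk Sp hp; have := le_rho_of En Hk Sq hq; lia.
move: A1 A2 A3; case: (p < rho k.+1); case: (S p); case: (y - p < rho k.+1);
  by case: (S (y - p)).
Qed.

Lemma full_count (S : pred nat) rho c r y : S 0 -> enumerates S rho ->
  (forall n, c <= n -> S n) -> 0 < r -> rho r = c -> c + c <= y.+1 ->
  A_card S y = 2 * r.-1 + (y.+1 - (c + c)).
Proof.
move=> S0 En Sc Hr Hrc Hy.
rewrite A_card_nat -(cnt_rho S0 En Hr) Hrc -(@refl_sum S _ y); last lia.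
rewrite -mid_count // -big_split /=.
apply: eq_big_nat => p /andP[_ Hp].
case hp: (p < c); case hq: (y - p < c).
- lia.
- have e1 : (c <= p) = false by lia.
  rewrite (Sc (y - p)) ?e1 /=; last lia.
  by case: (S p).
- have e1 : (p <= y - c) = false by lia.
  rewrite (Sc p) ?e1 /=; last lia.
  by rewrite andbF; case: (S (y - p)).
- have e1 : (p <= y - c) = true by lia.
  have e2 : (c <= p) = true by lia.
  by rewrite (Sc p) ?(Sc (y - p)) ?e1 ?e2 //=; lia.
Qed.

Theorem mainTheorem1 (S : pred nat) (rho : nat -> nat) (c r g : nat) :
  numerical_semigroup S -> enumerates S rho -> Arf S rho ->
  is_conductor S c -> 0 < r -> rho r = c -> g = genus S c ->
  forall l, 0 < l ->
    (forall i, 1 <= i <= r - 1 ->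
       lseq rho r i.-1 < l <= lseq rho r i -> is_dORD S rho l (2 * i)) /\
    (lseq rho r (r - 1) <= l -> is_dORD S rho l (l + 1 - g)).
Proof.
move=> [S0 _ _] En Ar [Sc Cmin] Hr Hrc Hg l Hl.
have [H E] := En.
have r1 := rho1 S0 En.
have cntc : cnt S c = r.-1 by rewrite -Hrc (cnt_rho S0 En).
have Hgc : g = c - r.-1 by rewrite Hg genus_cnt cntc.
have crr : r.-1 <= c by rewrite -Hrc; apply: rho_ge.
have above := rho_above En Sc Hr Hrc.
have gap : 0 < c -> ~~ S c.-1.
  move=> c0; apply/negP => Sc1.
  have : c <= c.-1.
    apply: Cmin => n Hn; case: (ltnP n c) => h; last exact: Sc.
    have -> : n = c.-1 by lia.
    exact: Sc1.
  lia.
split.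
- move=> i /andP[Hi1 Hir] /andP[Hli1 Hli].
  have r2 : 2 <= r by lia.
  have c0 : 0 < c by rewrite -Hrc -r1; apply: (rho_lt H); lia.
  have m1 : 0 < rho i.+1 by rewrite -r1; apply: (rho_lt H); lia.
  have mc : rho i.+1 <= c by rewrite -Hrc; apply: (rho_le H); lia.
  have ic : rho i < c by rewrite -Hrc; apply: (rho_lt H); lia.
  move: Hli; rewrite /lseq; have -> : (i == 0) = false by lia.
  move=> Hli; rewrite /is_dORD; split.
  + exists (c.-1 + rho i.+1).
      split; first by apply: Sc; lia.
      have := above (rho i.+1).-1; move=> Ha.
      have : rho l.+1 <= rho (r + (rho i.+1).-1) by apply: (rho_le H); lia.
      lia.
    rewrite A_card_nat.
    set x := c.-1 + rho i.+1.
    have -> : 2 * i = 2 * cnt S (rho i.+1) by rewrite (cnt_rho S0 En).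
    rewrite -(@refl_sum S _ x); last lia.
    apply: eq_big_nat => p /andP[_ Hp].
    case hp: (p < rho i.+1); case hq: (x - p < rho i.+1).
    * lia.
    * rewrite (Sc (x - p)) /=; last lia.
      by case: (S p).
    * rewrite (Sc p) /=; last lia.
      by [].
    * rewrite /= addn0; case Sp: (S p); case Sq: (S (x - p)) => //=; exfalso.
      have [a Ha Hap] := (proj1 (E p)) Sp.
      have [b Hb Hbq] := (proj1 (E (x - p))) Sq.
      have ia : i.+1 <= a by apply: (rho_leI H) => //; lia.
      have ib : i.+1 <= b by apply: (rho_leI H) => //; lia.
      have e : c.-1 = rho a + rho b - rho i.+1 by lia.
      case: (leqP a b) => ab.
      - have := Ar b a i.+1 (ltn0Sn i) ia ab; rewrite addnC -e => Sc1.
        by move: (gap c0); rewrite Sc1.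
      - have := Ar a b i.+1 (ltn0Sn i) ib (ltnW ab); rewrite -e => Sc1.
        by move: (gap c0); rewrite Sc1.
  + move=> y Sy Hy.
    case: (ltnP 1 i) => i2.
    * have ilo : r + rho i <= l.+1.
        move: Hli1; rewrite /lseq; have -> : (i.-1 == 0) = false by lia.
        have : 0 < rho i by rewrite -r1; apply: (rho_lt H); lia.
        rewrite prednK; [lia | lia].
      have : rho (r + rho i) <= rho l.+1 by apply: (rho_le H); lia.
      rewrite above => yl.
      apply: (LB S0 En) => //; try lia.
      move=> p Hp Sp; apply: Sc; lia.
    * have i1 : i = 1 by lia.
      subst i.
      have : rho 2 <= rho l.+1 by apply: (rho_le H); lia.
      have : rho 1 < rho 2 by apply: H.
      move=> h1 h2.
      apply: (LB S0 En) => //; try lia.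
      move=> p Hp Sp; have -> : p = 0 by lia.
      by rewrite subn0.
- move=> Hl2.
  have F : r <= l.+1 /\ r + c <= l + 2.
    move: Hl2; rewrite /lseq; case: eqP => [r1'|r1'].
      have : r = 1 by lia.
      move=> e; subst r; rewrite -Hrc r1; lia.
    have -> : (r - 1).+1 = r by lia.
    rewrite Hrc; lia.
  have Hrl : rho l.+1 = l + g.
    have := above (l.+1 - r); have -> : r + (l.+1 - r) = l.+1 by lia.
    lia.
  rewrite /is_dORD Hrl; split.
  + exists (l + g); first by split => //; apply: Sc; lia.
    rewrite (full_count S0 En Sc Hr Hrc); lia.
  + move=> y Sy Hy.
    rewrite (full_count S0 En Sc Hr Hrc); lia.
Qed.
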